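(* Let $d\ge1$, let $G$ be an $\mathcal{R}_d$-independent graph and let $G'$ be obtained from $G$ by applying a $(d+1)$-dimensional $X$-replacement or a $(d+1)$-dimensional $V$-replacement. Then $G'$ is $\mathcal{R}_{d+1}$-independent.
   Context: For a graph $G=(V,E)$ and a generic $p:V\to\mathbb{R}^d$ (coordinates algebraically independent over $\mathbb{Q}$), the rigidity matrix has a row for each $uv\in E$ with $p(u)-p(v)$ in the $d$ columns of $u$, $p(v)-p(u)$ in those of $v$, zeros elsewhere; $\mathcal{R}_d$ is its row matroid, with rank $r_d$. A graph with edge set $F$ is $\mathcal{R}_d$-independent if $r_d(F)=|F|$. For an integer $D\ge1$: a $D$-dimensional $X$-replacement takes two non-adjacent (vertex-disjoint) edges $uv,xy$ of $G$, deletes them, and adds a new vertex $w$ of degree $D+2$ adjacent to $u,v,x,y$ (and $D-2$ further existing vertices). A $D$-dimensional $V$-replacement takes two adjacent edges $xy,yz$ of $G$, deletes them, and adds a new vertex $w$ of degree $D+2$ adjacent to $x,y,z$ (and $D-1$ further existing vertices). *)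

(* Defs.v *)
From HB Require Import structures.
From mathcomp Require Import all_boot all_order all_algebra.
From mathcomp Require Import reals.
From mathcomp Require Import mpoly.
Set Implicit Arguments. Unset Strict Implicit. Unset Printing Implicit Defensive.
Import Order.TTheory GRing.Theory Num.Theory.
Local Open Scope ring_scope.

Definition simple_graph (V : finType) (E : {set {set V}}) : Prop :=
  forall e, e \in E -> #|e| = 2%N.

Definition coords (R : realType) (V : finType) (d : nat) (p : V -> 'rV[R]_d)
  (i : 'I_#|{: V * 'I_d}|) : R :=
  let vk := enum_val i in p vk.1 ord0 vk.2.

Definition generic (R : realType) (V : finType) (d : nat) (p : V -> 'rV[R]_d) : Prop :=
  forall P : {mpoly rat[#|{: V * 'I_d}|]},
    P != 0 -> (map_mpoly (fun q : rat => ratr q : R) P).@[coords p] != 0.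

(* Row of the rigidity matrix for the edge e = {u,v}: p(u)-p(v) in the
   columns of u, p(v)-p(u) in those of v, 0 elsewhere.  Rows live in
   {ffun V -> 'rV[R]_d} (the d columns of each vertex). *)
Definition rig_row (R : realType) (V : finType) (d : nat) (p : V -> 'rV[R]_d)
  (e : {set V}) : {ffun V -> 'rV[R]_d} :=
  [ffun w => if w \in e then \sum_(x in e) (p w - p x) else 0].

Definition Rd_independent (R : realType) (d : nat) (V : finType)
  (E : {set {set V}}) : Prop :=
  forall p : V -> 'rV[R]_d, generic p -> free (map (rig_row p) (enum E)).

(* Edges of G viewed in the graph with one extra vertex None. *)
Definition lift_edges (V : finType) (E : {set {set V}}) : {set {set option V}} :=
  [set [set Some x | x in e] | e : {set V} in E].

Definition star_edges (V : finType) (N : {set V}) : {set {set option V}} :=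
  [set [set None; Some z] | z in N].

Definition X_replacement (D : nat) (V : finType) (E : {set {set V}})
  (E' : {set {set option V}}) : Prop :=
  exists (u v x y : V) (N : {set V}),
    [/\ uniq [:: u; v; x; y], [set u; v] \in E, [set x; y] \in E,
        [/\ #|N| = (D + 2)%N, u \in N, v \in N, x \in N & y \in N] &
        E' = lift_edges (E :\ [set u; v] :\ [set x; y]) :|: star_edges N].

Definition V_replacement (D : nat) (V : finType) (E : {set {set V}})
  (E' : {set {set option V}}) : Prop :=
  exists (x y z : V) (N : {set V}),
    [/\ uniq [:: x; y; z], [set x; y] \in E, [set y; z] \in E,
        [/\ #|N| = (D + 2)%N, x \in N, y \in N & z \in N] &
        E' = lift_edges (E :\ [set x; y] :\ [set y; z]) :|: star_edges N].

(* Main.v *)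
Require Import Defs.
From HB Require Import structures.
From mathcomp Require Import all_boot all_order all_algebra.
From mathcomp Require Import reals.
From mathcomp Require Import mpoly.
Set Implicit Arguments. Unset Strict Implicit. Unset Printing Implicit Defensive.
Import Order.TTheory GRing.Theory Num.Theory.
Local Open Scope ring_scope.
Lemma free_setP (K : fieldType) (W : vectType K) (T : finType) (f : T -> W)
  (S : {set T}) :
  free (map f (enum S)) <->
  (forall k : T -> K, \sum_(e in S) k e *: f e = 0 -> forall e, e \in S -> k e = 0).
Proof.
have us : uniq (enum S) := enum_uniq _.
have ls : size (enum S) = #|S| by rewrite cardE.
split.
- move=> /freeP Hf k Hk e eS.
  have eS' : e \in enum S by rewrite mem_enum.
  have ilt : (index e (enum S) < #|S|)%N by rewrite -ls index_mem.
  have := Hf (fun i => k (nth e (enum S) i)) _ (Ordinal ilt).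
  rewrite /= nth_index //; apply.
  rewrite -[RHS]Hk -[RHS]big_enum /= [RHS](big_nth e) [RHS]big_mkord.
  rewrite ls.
  apply: eq_bigr => i _; rewrite (nth_map e) // ls //.
  idtac.
- move=> H; apply/freeP => k Hk i0.
  have lt0 : (i0 < size (enum S))%N by rewrite ls.
  have x0 : T by move: lt0; case: (enum S) => [|x _] //.
  pose kk e := \sum_(i < #|S|) (if nth x0 (enum S) i == e then k i else 0).
  have : kk (nth x0 (enum S) i0) = 0.
    apply: H; last by rewrite -mem_enum mem_nth.
    rewrite /kk.
    have -> : \sum_(e in S) (\sum_(i < #|S|) (if nth x0 (enum S) i == e then k i else 0)) *: f e
      = \sum_(e in S) \sum_(i < #|S|) (if nth x0 (enum S) i == e then k i *: f e else 0).
      apply: eq_bigr => e _; rewrite scaler_suml; apply: eq_bigr => i _.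
      by case: ifP; rewrite ?scale0r.
    rewrite exchange_big /= -[RHS]Hk; apply: eq_bigr => i _.
    have ilt : (i < size (enum S))%N by rewrite ls.
    rewrite -big_mkcondr /= (nth_map x0) //.
    rewrite (eq_bigl (fun e => e == nth x0 (enum S) i)); first by rewrite big_pred1_eq.
    move=> e /=; apply/andP/eqP => [[_ /eqP <-] //|->]; split => //.
    by rewrite -mem_enum mem_nth.
  rewrite /kk (bigD1 i0) //= eqxx big1 ?addr0 // => i ne.
  case: eqP => // /eqP; rewrite nth_uniq // ?ls // => /eqP/val_inj ei.
  by rewrite ei eqxx in ne.
Qed.

Definition rigM (R : realType) (V : finType) (D : nat) (q : V -> 'rV[R]_D)
  (s : seq {set V}) : 'M[R]_(size s, #|{: V * 'I_D}|) :=
  \matrix_(i, j) rig_row q (nth set0 s i) (enum_val j).1 ord0 (enum_val j).2.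

Lemma rigM_mul (R : realType) (V : finType) (D : nat) (q : V -> 'rV[R]_D)
  (s : seq {set V}) (v : 'rV[R]_(size s)) w c :
  (v *m rigM q s) ord0 (enum_rank (w, c)) =
  (\sum_(i < size s) v ord0 i *: (map (rig_row q) s)`_i) w ord0 c.
Proof.
rewrite !mxE sum_ffunE summxE; apply: eq_bigr => i _.
rewrite (nth_map set0) // !ffunE !mxE enum_rankK /=.
by rewrite /rig_row ffunE.
Qed.

Lemma free_rigM (R : realType) (V : finType) (D : nat) (q : V -> 'rV[R]_D)
  (s : seq {set V}) :
  free (map (rig_row q) s) <-> row_free (rigM q s).
Proof.
split.
- move=> /(@freeP _ _ _ (map_tuple (rig_row q) (in_tuple s))) H.
  apply: inj_row_free => v Hv; apply/rowP => i.
  have := H (fun i => v ord0 i) _ i; rewrite mxE.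
apply.
  apply/ffunP => w; apply/rowP => c.
  by rewrite -rigM_mul Hv !ffunE !mxE.
- move=> H; apply/(@freeP _ _ _ (map_tuple (rig_row q) (in_tuple s))) => k Hk i.
  have Hv : (\row_i k i) *m rigM q s = 0 *m rigM q s.
    apply/rowP => j; rewrite mul0mx -[j]enum_valK; case: (enum_val j) => w c.
    by rewrite rigM_mul (eq_bigr (fun i => k i *: (map (rig_row q) s)`_i)) ?Hk ?ffunE ?mxE // => l _; rewrite mxE.
  by have := row_free_inj H Hv => /rowP /(_ i); rewrite !mxE.
Qed.

Definition rigPoly (V : finType) (D : nat) (s : seq {set V}) :
  'M[{mpoly rat[#|{: V * 'I_D}|]}]_(size s, #|{: V * 'I_D}|) :=
  \matrix_(i, j) (if (enum_val j).1 \in nth set0 s i then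
       \sum_(x in nth set0 s i) ('X_j - 'X_(enum_rank (x, (enum_val j).2)))
     else 0).

Lemma rigPoly_eval (R : realType) (V : finType) (D : nat) (q : V -> 'rV[R]_D)
  (s : seq {set V}) :
  map_mx (fun P => (map_mpoly ratr P).@[coords q]) (rigPoly D s) = rigM q s.
Proof.
apply/matrixP => i j; rewrite !mxE /rig_row ffunE.
case: ifP => _; last by rewrite rmorph0 meval0 mxE.
rewrite summxE (raddf_sum (map_mpoly (ratr : rat -> R))) raddf_sum.
apply: eq_bigr => x _.
rewrite raddfB raddfB /= !map_mpolyX !mevalXU /coords enum_rankK /=.
by rewrite !mxE.
Qed.

Lemma det_eval (R : realType) (V : finType) (D : nat) (q : V -> 'rV[R]_D)
  (s : seq {set V}) (f : 'I_(size s) -> 'I_#|{: V * 'I_D}|) :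
  \det (colsub f (rigM q s)) =
  (map_mpoly ratr (\det (colsub f (rigPoly D s)))).@[coords q].
Proof.
rewrite -rigPoly_eval -map_mxsub.
rewrite (map_mx_comp (map_mpoly (ratr : rat -> R)) (meval (coords q))).
by rewrite det_map_mx det_map_mx.
Qed.

Lemma transfer (R : realType) (V : finType) (D : nat) (q0 q : V -> 'rV[R]_D)
  (s : seq {set V}) :
  generic q -> row_free (rigM q0 s) -> row_free (rigM q s).
Proof.
move=> gq rf0.
have rfull : row_full (rigM q0 s)^T by rewrite /row_full mxrank_tr.
set f := fullrankfun rfull.
have u0 := fullrowsub_unit rfull.
have ct : forall q' : V -> 'rV[R]_D, (colsub f (rigM q' s))^T = rowsub f (rigM q' s)^T.
  by move=> q'; rewrite trmx_mxsub.
rewrite -ct unitmx_tr unitmxE unitfE det_eval in u0.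
have nz : \det (colsub f (rigPoly D s)) != 0.
  by apply: contraNneq u0 => ->; rewrite rmorph0 meval0.
have := gq _ nz; rewrite -det_eval -unitfE -unitmxE -row_free_unit => rfq.
apply: inj_row_free => v Hv.
apply/eqP; rewrite -(mulmx_free_eq0 _ rfq) mulmx_colsub Hv.
by apply/eqP/matrixP => i j; rewrite !mxE.
Qed.

Lemma comp_mpoly_comp (K : comRingType) (n k l : nat) (P : {mpoly K[n]})
  (lq : n.-tuple {mpoly K[k]}) (lr : k.-tuple {mpoly K[l]}) :
  (P \mPo lq) \mPo lr = P \mPo [tuple (tnth lq i \mPo lr) | i < n].
Proof.
rewrite [P \mPo lq]comp_mpolyEX [in RHS]comp_mpolyEX raddf_sum /=; apply: eq_bigr => m _.
rewrite comp_mpolyZ !comp_mpolyX rmorph_prod; congr (_ *: _); apply: eq_bigr => i _.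
by rewrite rmorphXn tnth_mktuple.
Qed.

Lemma sub_generic (R : realType) (V : finType) (d : nat)
  (p : option V -> 'rV[R]_d.+1) :
  generic p -> generic (fun z : V => \row_(c < d) p (Some z) ord0 (lift ord_max c)).
Proof.
move=> gp P nzP.
pose σ (i : 'I_#|{: V * 'I_d}|) : 'I_#|{: option V * 'I_d.+1}| :=
  enum_rank (Some (enum_val i).1, lift ord_max (enum_val i).2).
pose τ (j : 'I_#|{: option V * 'I_d.+1}|) : {mpoly rat[#|{: V * 'I_d}|]} :=
  match (enum_val j).1, unlift ord_max (enum_val j).2 with
  | Some v, Some c' => 'X_(enum_rank (v, c'))
  | _, _ => 0 end.
pose lq := [tuple ('X_(σ i) : {mpoly rat[#|{: option V * 'I_d.+1}|]}) | i < #|{: V * 'I_d}|].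
pose lr := [tuple τ j | j < #|{: option V * 'I_d.+1}|].
have QP : (P \mPo lq) \mPo lr = P.
  rewrite comp_mpoly_comp -[RHS]comp_mpoly_id; congr (P \mPo _).
  apply: eq_from_tnth => i; rewrite !tnth_mktuple comp_mpolyXU.
  rewrite -tnth_nth tnth_mktuple /τ /σ enum_rankK /= liftK.
  by rewrite -surjective_pairing enum_valK.
have nzQ : P \mPo lq != 0.
  by apply: contraNneq nzP => Q0; rewrite -QP Q0 comp_mpoly0.
have := gp _ nzQ.
rewrite (map_mpoly_comp _ _ (fmorph_inj (ratr : {rmorphism rat -> R}))).
rewrite comp_mpoly_meval.
congr (_ != 0); apply: meval_eq => i.
rewrite tnth_map tnth_mktuple map_mpolyX mevalXU /coords /σ enum_rankK /=.
by rewrite mxE.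
Qed.

Lemma sum_compE (R : realType) (T I : finType) (D : nat) (A : {pred I}) (k : I -> R)
  (F : I -> {ffun T -> 'rV[R]_D}) w c :
  (\sum_(i in A) k i *: F i) w ord0 c = \sum_(i in A) k i * F i w ord0 c.
Proof. by rewrite sum_ffunE summxE; apply: eq_bigr => i _; rewrite !ffunE !mxE. Qed.

Lemma rig_row_lift (R : realType) (V : finType) (D : nat) (p : option V -> 'rV[R]_D)
  (f : {set V}) z :
  rig_row p [set Some x | x in f] (Some z) = rig_row (fun x => p (Some x)) f z.
Proof.
rewrite /rig_row !ffunE mem_imset; last by move=> ? ? [].
case: ifP => // _; rewrite big_imset //; by move=> ? ? _ _ [].
Qed.

Lemma rig_row_star (R : realType) (V : finType) (D : nat) (p : option V -> 'rV[R]_D)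
  (z z0 : V) :
  rig_row p [set None; Some z] (Some z0) =
  if z0 == z then p (Some z) - p None else 0.
Proof.
rewrite /rig_row !ffunE !inE /=.
have -> : (Some z0 == Some z) = (z0 == z) by apply/eqP/eqP => [[]|->].
case: eqP => // ->.
rewrite big_setU1 ?inE //= big_set1 subrr addr0 //.
Qed.

Definition lft (V : finType) (f : {set V}) : {set option V} := [set Some x | x in f].
Definition str (V : finType) (z : V) : {set option V} := [set None; Some z].

Lemma special (R : realType) (V : finType) (d : nat) (E : {set {set V}})
  (b : V -> 'rV[R]_d) :
  (forall k : {set V} -> R, \sum_(f in E) k f *: rig_row b f = 0 ->
      forall f, f \in E -> k f = 0) ->
  let p0 := fun o : option V => match o with
     | None => 0
     | Some z => \row_(c < d.+1) (if unlift ord_max c is Some c' then b z ord0 c' else 1)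
     end in
  forall k : {set option V} -> R,
    \sum_(e in lift_edges E :|: star_edges [set: V]) k e *: rig_row p0 e = 0 ->
    forall e, e \in lift_edges E :|: star_edges [set: V] -> k e = 0.
Proof.
move=> HE p0 k Hk.
have injL : injective (@lft V) by apply: imset_inj => ? ? [].
have injS : injective (@str V).
  move=> z z' /setP /(_ (Some z)); rewrite !inE eqxx /= => /esym/eqP [] //.
have disj : [disjoint lift_edges E & star_edges [set: V]].
  apply/pred0P => e /=; apply/negP => /andP [/imsetP [f _ ->] /imsetP [z _ ef]].
  by move: ef => /setP /(_ None); rewrite !inE eqxx /= => /imsetP [].
rewrite (eq_bigl [predU lift_edges E & star_edges [set: V]]) in Hk; last first.
  by move=> e; rewrite !inE.
rewrite bigU // big_imset /= in Hk; last by move=> ? ? _ _; apply: injL.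
rewrite big_imset /= in Hk; last by move=> ? ? _ _; apply: injS.
have kS : forall z, k (str z) = 0.
  move=> z0.
  have := congr1 (fun g : {ffun option V -> 'rV[R]_d.+1} => g (Some z0) ord0 ord_max) Hk.
  rewrite /= ffunE mxE sum_compE sum_compE big1; last first.
    move=> f _; rewrite (rig_row_lift p0) /rig_row ffunE.
    case: ifP => _; last by rewrite mxE mulr0.
    rewrite summxE big1 ?mulr0 // => x _.
    by rewrite /p0 !mxE unlift_none subrr.
  rewrite (bigD1 z0) //= big1; last first.
    by move=> z /andP [_ /negPf nz]; rewrite /str rig_row_star eq_sym nz mxE mulr0.
  rewrite /str rig_row_star eqxx /p0 !mxE unlift_none subr0 mulr1 !addr0.
  by rewrite add0r !ffunE !mxE.
rewrite [X in _ + X]big1 ?addr0 in Hk; last by move=> z _; rewrite kS scale0r.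
have kL : forall f, f \in E -> k (lft f) = 0.
  apply: (HE (fun f => k (lft f))).
  apply/ffunP => z0; apply/rowP => c.
  have := congr1 (fun g : {ffun option V -> 'rV[R]_d.+1} => g (Some z0) ord0 (lift ord_max c)) Hk.
  rewrite /= sum_compE !ffunE !mxE => <-.
  rewrite sum_compE; apply: eq_bigr => f _; congr (_ * _).
  rewrite (rig_row_lift p0) /rig_row !ffunE.
  case: ifP => _; last by rewrite !mxE.
  rewrite !summxE; apply: eq_bigr => x _.
  by rewrite /p0 !mxE liftK.
move=> e /setUP [/imsetP [f fE ->] | /imsetP [z _ ->]].
  exact: kL.
exact: kS.
Qed.


Theorem corollary4p18 (R : realType) (d : nat) (V : finType)
  (E : {set {set V}}) (E' : {set {set option V}}) :
  (1 <= d)%N ->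
  simple_graph E ->
  Rd_independent R d E ->
  X_replacement d.+1 E E' \/ V_replacement d.+1 E E' ->
  Rd_independent R d.+1 E'.
Proof.
move=> _ _ HE Hrep p' gp'.
set b := fun z : V => \row_(c < d) p' (Some z) ord0 (lift ord_max c).
have gb : generic b := sub_generic gp'.
have /free_setP Hb := HE b gb.
pose p0 := fun o : option V => match o with
     | None => 0
     | Some z => \row_(c < d.+1) (if unlift ord_max c is Some c' then b z ord0 c' else 1)
     end.
have Hsp := special Hb.
have sub : E' \subset lift_edges E :|: star_edges [set: V].
  case: Hrep => [[u [v [x [y [N [_ _ _ _ ->]]]]]] | [x [y [z [N [_ _ _ _ ->]]]]]];
    apply: setUSS; rewrite /lift_edges /star_edges; apply: imsetS;
    rewrite ?subsetT //; apply: subset_trans (subD1set _ _) (subD1set _ _).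
have Hp0 : free (map (rig_row p0) (enum E')).
  apply/free_setP => k Hk e eE'.
  pose k2 e := if e \in E' then k e else 0.
  have := Hsp k2 _ e (subsetP sub e eE'); rewrite /k2 eE'; apply.
  rewrite -[RHS]Hk [RHS]big_mkcond /=.
  rewrite [LHS](bigID (fun e => e \in E')) /= [X in _ + X]big1 ?addr0; last first.
    by move=> e0 /andP [_ /negPf ->]; rewrite scale0r.
  rewrite [RHS](bigID (fun e => e \in lift_edges E :|: star_edges [set: V])) /=.
  rewrite [X in _ = _ + X]big1 ?addr0; last first.
    move=> e0 /negPf n0; case: ifP => // e0E'.
    by move: (subsetP sub e0 e0E'); rewrite n0.
  rewrite -big_mkcondr; apply: eq_big => [e0 | e0 /andP [_ ->]] //.
apply/free_rigM; apply: (@transfer R (option V) d.+1 p0 p' (enum E') gp').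
exact/free_rigM.
Qed.
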